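(* If $G$ is a $3$-$\gamma_{\rm tg}$-critical graph, then $G$ has no dominating vertex, and $\gamma_{\rm tg}(G|w)=2$ for every vertex $w$ of $G$.
   Context: A dominating vertex is a vertex adjacent to all other vertices. Total domination game on a graph without isolated vertices: Dominator and Staller alternately choose vertices, each chosen vertex must be adjacent to some vertex not yet totally dominated; the game ends when no legal move exists; Dominator minimizes, Staller maximizes the number of moves; $\gamma_{\rm tg}(G)$ is the number of moves in the Dominator-start game under optimal play. $G|w$ is $G$ with $w$ declared already totally dominated, with $\gamma_{\rm tg}(G|w)$ defined analogously. $G$ is $3$-$\gamma_{\rm tg}$-critical if $\gamma_{\rm tg}(G)=3$ and $\gamma_{\rm tg}(G|v)<3$ for every vertex $v$. *)

(* Defs.v *)
From mathcomp Require Import all_boot.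
Set Implicit Arguments. Unset Strict Implicit. Unset Printing Implicit Defensive.

Definition simple_graph (T : finType) (e : rel T) : Prop :=
  symmetric e /\ irreflexive e.

Definition no_isolated (T : finType) (e : rel T) : Prop :=
  forall v : T, exists u : T, e v u.

Definition nbhd (T : finType) (e : rel T) (v : T) : {set T} := [set u | e v u].

Definition dominating_vertex (T : finType) (e : rel T) (v : T) : Prop :=
  forall u : T, u != v -> e v u.

(* In a position where D is the set of already totally dominated vertices,
   a vertex v is a legal move iff it is adjacent to some vertex not in D. *)
Definition legal (T : finType) (e : rel T) (D : {set T}) (v : T) : bool :=
  ~~ (nbhd e v \subset D).

(* Value (number of remaining moves under optimal play) of the total
   domination game from position D, with [dom] = true iff Dominator is to move.
   Each move strictly enlarges D, so fuel #|T| suffices. *)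
Fixpoint tdg_value (T : finType) (e : rel T) (fuel : nat) (dom : bool)
  (D : {set T}) : nat :=
  match fuel with
  | 0 => 0
  | f.+1 =>
    if [exists v, legal e D v] then
      (if dom then
         \big[minn/#|T|.+1]_(v | legal e D v) tdg_value e f false (D :|: nbhd e v)
       else
         \max_(v | legal e D v) tdg_value e f true (D :|: nbhd e v)).+1
    else 0
  end.

Definition gamma_tg (T : finType) (e : rel T) : nat :=
  tdg_value e #|T| true set0.

(* gamma_tg(G|w): Dominator-start game with w declared already totally dominated. *)
Definition gamma_tg_pre (T : finType) (e : rel T) (w : T) : nat :=
  tdg_value e #|T| true [set w].

Definition tg_critical3 (T : finType) (e : rel T) : Prop :=
  gamma_tg e = 3 /\ forall v : T, gamma_tg_pre e v < 3.

(* Main.v *)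
Require Import Defs.
From mathcomp Require Import all_boot.

Lemma bigmin_le (I:finType) (P:pred I) (F: I->nat) x j :
  P j -> \big[minn/x]_(i | P i) F i <= F j.
Proof.
move=> Pj; have: j \in index_enum I by rewrite mem_index_enum.
elim: (index_enum I) => [|a r IH] //; rewrite big_cons in_cons.
case/orP => [/eqP<-|/IH H]; first by rewrite Pj geq_minl.
case: (P a) => //; exact: leq_trans (geq_minr _ _) H.
Qed.

Lemma val_nolegal (T : finType) (e : rel T) f b D :
  ~~ [exists v, legal e D v] -> tdg_value e f b D = 0.
Proof. by case: f => [|f] //= H; rewrite (negbTE H). Qed.

Lemma nbhd_cover (T : finType) (e : rel T) : simple_graph e -> no_isolated e ->
  forall x, exists y, x \in nbhd e y.
Proof.
move=> [sym _] ni x; case: (ni x) => y Hy; exists y; by rewrite inE sym.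
Qed.

Lemma noleg_all (T : finType) (e : rel T) D : simple_graph e -> no_isolated e ->
  ~~ [exists v, legal e D v] -> forall x, x \in D.
Proof.
move=> sg ni H x; case: (nbhd_cover _ _ sg ni x) => y Hy.
move: H; rewrite negb_exists => /forallP /(_ y); rewrite /legal negbK.
by move/subsetP; apply.
Qed.

Lemma card_ge2 (T : finType) (e : rel T) (v : T) : simple_graph e -> no_isolated e ->
  1 < #|T|.
Proof.
move=> [_ irr] ni.
case: (ni v) => u Hu.
have nuv : u != v by apply/eqP => E; move: Hu; rewrite E irr.
rewrite (cardD1 v) (cardD1 u) !inE nuv //.
Qed.

Theorem lemma4p5 (T : finType) (e : rel T) :
  simple_graph e -> no_isolated e -> tg_critical3 e ->
  (~ exists v : T, dominating_vertex e v) /\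
  (forall w : T, gamma_tg_pre e w = 2).
Proof.
move=> sg ni [g3 crit].
have [sym irr] := sg.
have nodom : ~ exists v : T, dominating_vertex e v.
  case=> v dv; have c2 := card_ge2 _ _ v sg ni; move: g3; rewrite /gamma_tg.
  case: #|T| c2 => [|[|f]] // _ /=.
  have lv : legal e set0 v.
    case: (ni v) => u Hu; rewrite /legal; apply/negP => /subsetP /(_ u).
    by rewrite !inE Hu => /(_ isT).
  have -> : [exists v0, legal e set0 v0] by apply/existsP; exists v.
  move=> H.
  have : \big[minn/#|T|.+1]_(v0 | legal e set0 v0)
           tdg_value e f.+1 false (set0 :|: nbhd e v0) <= 1.
    apply: leq_trans (bigmin_le _ _ _ _ _ lv) _.
    rewrite /=; case: ifP => // _.
    rewrite ltnS; apply/bigmax_leqP => u lu; rewrite leqn0; apply/eqP/val_nolegal.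
    apply/existsP => -[z]; rewrite /legal => /negP; apply; apply/subsetP => y _.
    rewrite !inE; case: (eqVneq y v) => [->|nyv].
      apply/orP; right; move: lu; rewrite /legal.
      case: (eqVneq u v) => [->|nuv]; first by rewrite set0U => /subsetPn [t]; rewrite !inE => ->.
      by rewrite sym dv.
    by rewrite dv.
  by case: H => ->.
split=> // w.
have c2 := card_ge2 _ _ w sg ni.
have := crit w; rewrite /gamma_tg_pre.
case: #|T| c2 => [|[|f]] // _ /=.
have ex : [exists v, legal e [set w] v].
  case: (boolP [exists v, legal e [set w] v]) => // H.
  case: (ni w) => u Hu.
  have := noleg_all _ _ _ sg ni H u; rewrite inE => /eqP E; by move: Hu; rewrite E irr.
rewrite ex; set B := (\big[minn/_]_(_ | _) _).
have : 0 < B.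
  apply: (big_ind (fun x => 0 < x)) => //; first by move=> x y; rewrite leq_min => -> ->.
  move=> v lv /=.
  case: ifP => // /negbT H.
  exfalso; apply: nodom; exists v => u nuv.
  have wv : w = v.
    apply/eqP; apply/negPn/negP => nwv.
    have := noleg_all _ _ _ sg ni H v; rewrite !inE irr orbF eq_sym.
    by rewrite (negbTE nwv).
  subst w.
  by have := noleg_all _ _ _ sg ni H u; rewrite !inE (negbTE nuv).
by case: B => [|[|k]].
Qed.
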